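(* Let $q=2^r$ with $r\ge1$. Let $k\ne1$ be an element of $(\mathbb{Z}/q\mathbb{Z})^\times$ and let $\theta_k$ denote multiplication by $k$ on $(\mathbb{Z}/q\mathbb{Z})^\times$. Let $f:(\mathbb{Z}/2^r\mathbb{Z})^\times\to\mathbb{R}$ be a function that is monotonic on $[1,2^r]_\mathbb{Z}$. If $f\circ\theta_k=f$, then $f$ is constant on $[1,2^{r-1}]_\mathbb{Z}$.
   Context: $[a,b]_\mathbb{Z}$ denotes the set of odd integers in the closed interval $[a,b]$; $[1,2^r]_\mathbb{Z}$ is used as the set of representatives of $(\mathbb{Z}/2^r\mathbb{Z})^\times$, and ''monotonic on $[1,2^r]_\mathbb{Z}$'' means $i\mapsto f(i\bmod 2^r)$ is monotonic on this set of integers. *)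

(* Defs.v *)
From HB Require Import structures.
From mathcomp Require Import all_boot all_order all_algebra.
From mathcomp Require Import reals.
Set Implicit Arguments. Unset Strict Implicit. Unset Printing Implicit Defensive.
Import Order.TTheory GRing.Theory Num.Theory.
Local Open Scope ring_scope.

(* residue of the natural number i in Z/2^rZ (for r >= 1, 'Z_(2^r) is Z/2^rZ) *)
Definition zres (r i : nat) : 'Z_(2 ^ r) := i%:R.

Definition monotone_on_odd (R : realType) (r : nat) (f : 'Z_(2 ^ r) -> R) : Prop :=
  (forall i j : nat, odd i -> odd j -> (1 <= i)%N -> (i <= j)%N -> (j <= 2 ^ r)%N ->
      f (zres r i) <= f (zres r j))
  \/
  (forall i j : nat, odd i -> odd j -> (1 <= i)%N -> (i <= j)%N -> (j <= 2 ^ r)%N ->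
      f (zres r j) <= f (zres r i)).

(* Main.v *)
Require Import Defs.
From HB Require Import structures.
From mathcomp Require Import all_boot all_order all_algebra.
From mathcomp Require Import reals.
From mathcomp Require Import zify.
Import Order.TTheory GRing.Theory Num.Theory.

Lemma key {r y : nat} : (2 <= r)%N -> odd y -> y != 1%N -> (2^r %| y*y - 1)%N -> (2^(r.-1) <= y+1)%N.
Proof.
move=> hr hy hy1 hd.
have [b Hb] : exists b, y = (b.*2 + 1)%N.
  by exists y./2; rewrite -[in LHS](odd_double_half y) hy addnC.
subst y.
have E : ((b.*2+1)*(b.*2+1) - 1 = 4 * (b * b.+1))%N.
  rewrite -!muln2; lia.
have Er : (2^r = 4 * 2^(r-2))%N by rewrite -[4%N]/(2^2)%N -expnD subnKC.
have Er1 : (2^r.-1 = 2 * 2^(r-2))%N by rewrite -expnS; congr (_ ^ _); lia.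
move: hd; rewrite E Er dvdn_pmul2l // => hd.
rewrite Er1.
have P0 : (0 < 2^(r-2))%N by rewrite expn_gt0.
case: (boolP (odd b)) => hb.
- have : (2^(r-2) %| b.+1)%N.
    by rewrite -(@Gauss_dvdr _ b) // coprimeXl // coprime2n.
  move/dvdn_leq => /(_ isT) ; rewrite -muln2; lia.
- have : (2^(r-2) %| b)%N.
    by rewrite -(@Gauss_dvdl _ _ b.+1) // coprimeXl // coprime2n /=.
  have b0 : (0 < b)%N by case: (b) hy1.
  move/dvdn_leq => /(_ b0) ; rewrite -muln2; lia.
Qed.

Lemma pow2 {x : nat} : odd x -> forall j, (2^(j.+1) %| x^(2^j) - 1)%N.
Proof.
move=> hx; elim=> [|j IH].
  by rewrite expn0 expn1 expn1 -(odd_double_half x) hx addnC addnK -muln2 dvdn_mull.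
have x0 : (0 < x)%N by case: (x) hx.
set a := (x ^ 2 ^ j)%N in IH *.
have Ea : (x ^ 2 ^ j.+1 = a * a)%N by rewrite /a expnSr expnM mulnn.
have a0 : (0 < a)%N by rewrite /a expn_gt0 x0.
have ao : odd a by rewrite /a oddX hx orbT.
rewrite Ea.
have -> : (a * a - 1 = (a - 1) * (a + 1))%N.
  rewrite mulnDr muln1 mulnBl mul1n; lia.
rewrite expnS mulnC; apply: dvdn_mul => //.
by rewrite dvdn2 oddD ao.
Qed.

Local Open Scope ring_scope.

Lemma Zp_natE (r a b : nat) : (1 < 2^r)%N -> (a = b %[mod 2^r])%N ->
  (a%:R : 'Z_(2^r)) = b%:R.
Proof. by move=> h e; apply: val_inj; rewrite /= !val_Zp_nat. Qed.

Lemma Zp_val_odd {r : nat} {z : 'Z_(2^r)} : (1 <= r)%N -> z \is a GRing.unit -> odd (val z).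
Proof.
move=> hr hz.
have h1 : (1 < 2^r)%N by rewrite -{1}(expn0 2) ltn_exp2l.
move: hz; rewrite -(natr_Zp z) unitZpE // coprime_pexpl // coprime2n.
by rewrite natr_Zp.
Qed.

Theorem lemma4p3 (R : realType) (r : nat) (hr : (1 <= r)%N)
  (k : 'Z_(2 ^ r)) (hku : k \is a GRing.unit) (hk1 : k != 1)
  (f : 'Z_(2 ^ r) -> R) (hmono : monotone_on_odd f)
  (hinv : forall x : 'Z_(2 ^ r), x \is a GRing.unit -> f (k * x) = f x) :
  forall i j : nat, odd i -> odd j -> (1 <= i)%N -> (i <= 2 ^ r.-1)%N ->
    (1 <= j)%N -> (j <= 2 ^ r.-1)%N -> f (zres r i) = f (zres r j).
Proof.
move=> i j hi hj hi1 hi2 hj1 hj2.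
case: (ltnP r 2) => hr2.
  have r1 : r = 1%N by lia.
  have e : (2^r.-1 = 1)%N by rewrite r1.
  rewrite e in hi2 hj2.
  have -> : i = 1%N by lia.
  by have -> : j = 1%N by lia.
have hq : (1 < 2^r)%N by rewrite -{1}(expn0 2) ltn_exp2l.
have one : (1 : 'Z_(2^r)) = 1%:R by rewrite mulr1n.
have ex : exists n, k ^+ (2^n) == 1.
  exists r.-1.
  have ko := Zp_val_odd hr hku.
  rewrite -(natr_Zp k) -natrX one; apply/eqP/Zp_natE => //; apply/eqP.
  rewrite eqn_mod_dvd ?expn_gt0 ?odd_gt0 //.
  by have := pow2 (x := val k) ko r.-1; rewrite prednK.
case: (ex_minnP ex) => N hN hmin.
case: N hN hmin => [|N'] hN hmin.
  by move: hN; rewrite expn0 expr1 (negbTE hk1).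
set z := k ^+ (2 ^ N').
have hz1 : z != 1.
  by apply/negP => /hmin; rewrite ltnn.
have hzz : z * z = 1.
  by apply/eqP; rewrite -expr2 -exprM -expnSr.
have fk : forall m, f (k ^+ m) = f 1.
  elim=> [|m IH]; first by rewrite expr0.
  by rewrite exprS hinv ?unitrX.
have zu : z \is a GRing.unit by rewrite unitrX.
set y := val z.
have zE : z = y%:R by rewrite natr_Zp.
have yo : odd y := Zp_val_odd hr zu.
have y1 : y != 1%N.
  apply/negP => /eqP y1; move: hz1; rewrite zE y1 -one eqxx //.
have ylt : (y < 2^r)%N by rewrite -[X in (_ < X)%N](Zp_cast hq) ltn_ord.
have yd : (2^r %| y * y - 1)%N.
  rewrite -eqn_mod_dvd ?muln_gt0 ?odd_gt0 //.
  have : ((y*y)%:R : 'Z_(2^r)) = 1%:R by rewrite natrM -zE hzz.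
  by move/(congr1 val) => /=; rewrite val_Zp_nat // Zp_cast // => ->.
have hy := key hr2 yo y1 yd.
have claim : forall i, odd i -> (1 <= i)%N -> (i <= 2^r.-1)%N -> f (zres r i) = f 1.
  move=> x hx hx1 hx2.
  have ev : ~~ odd (2^r.-1) by rewrite oddX /=; case: (r) hr2 => [|[|]].
  have hxy : (x <= y)%N.
    have : x != (2^r.-1)%N by apply/negP => /eqP e; move: hx; rewrite e (negbTE ev).
    move: hx2 hy; generalize (2^r.-1)%N => P; clear; lia.
  have fy : f (zres r y) = f 1 by rewrite /zres -zE fk.
  have f1 : f (zres r 1) = f 1 by rewrite /zres -one.
  case: hmono => h.
  - apply/le_anti/andP; split.
      by rewrite -fy; apply: h => //; apply: ltnW.
    by rewrite -f1; apply: h => //; apply: leq_trans hx2 _; rewrite leq_exp2l ?leq_pred.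
  - apply/le_anti/andP; split.
      by rewrite -f1; apply: h => //; apply: leq_trans hx2 _; rewrite leq_exp2l ?leq_pred.
    by rewrite -fy; apply: h => //; apply: ltnW.
by rewrite !claim.
Qed.
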